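(* Let $m\ge2$ be even, $n\ge2$, and let $g,h\in\mathbb{R}$ with $h\neq0$ and $g/h\notin\mathbb{Z}$. Let $\mathcal{A}$ be the Cauchy-Hankel tensor of order $m$ and dimension $n$ with entries $a_{i_1\cdots i_m}=\frac{1}{g+h(i_1+\cdots+i_m)}$, $i_j\in\{1,\dots,n\}$. Then $\mathcal{A}$ is positive definite if and only if $g+mh>0$ and $g+nmh>0$.
   Context: A tensor $\mathcal{A}$ of even order $m$ is positive definite if $\mathcal{A}x^m=\sum_{i_1,\dots,i_m}a_{i_1\cdots i_m}x_{i_1}\cdots x_{i_m}>0$ for all nonzero $x\in\mathbb{R}^n$. *)

(* Defs.v *)
From Stdlib Require Import Reals ZArith Arith.
Open Scope R_scope.

Fixpoint sum1n (n : nat) (f : nat -> R) : R :=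
  match n with
  | O => 0
  | S k => sum1n k f + f (S k)
  end.

(* A real tensor of order m and dimension n: entries indexed by multi-indices
   (i_1,...,i_m), i_j in {1,...,n}, represented as lists [i_1; ...; i_m]. *)
Definition tensor := list nat -> R.

(* Partial homogeneous form: sum over the remaining k indices, given the
   already chosen prefix (reversed) and the product of the x's so far. *)
Fixpoint tform_aux (n : nat) (A : tensor) (x : nat -> R)
         (k : nat) (pre : list nat) (p : R) : R :=
  match k with
  | O => A (List.rev pre) * p
  | S k' => sum1n n (fun i => tform_aux n A x k' (i :: pre) (p * x i))
  end.

Definition tform (m n : nat) (A : tensor) (x : nat -> R) : R :=
  tform_aux n A x m nil 1.

Definition vec_nonzero (n : nat) (x : nat -> R) : Prop :=
  exists i, (1 <= i <= n)%nat /\ x i <> 0.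

Definition pos_def (m n : nat) (A : tensor) : Prop :=
  forall x : nat -> R, vec_nonzero n x -> tform m n A x > 0.

Definition cauchy_hankel (g h : R) : tensor :=
  fun idx => / (g + h * INR (List.fold_right Nat.add 0%nat idx)).

(* Main.v *)
Require Import Defs.
From Stdlib Require Import Reals ZArith Arith.
From Stdlib Require Import Lra Lia Psatz Classical.
Open Scope R_scope.

Lemma sum1n_S n f : sum1n (S n) f = sum1n n f + f (S n).
Proof. reflexivity. Qed.

Lemma sum1n_ext n f g : (forall i, (1 <= i <= n)%nat -> f i = g i) -> sum1n n f = sum1n n g.
Proof. induction n; intros H; simpl; [reflexivity|]. rewrite IHn by (intros; apply H; lia). rewrite H by lia. reflexivity. Qed.

Lemma sum1n_plus n f g : sum1n n (fun i => f i + g i) = sum1n n f + sum1n n g.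
Proof. induction n; simpl; [lra|]. rewrite IHn; lra. Qed.

Lemma sum1n_scal n c f : sum1n n (fun i => c * f i) = c * sum1n n f.
Proof. induction n; simpl; [lra|]. rewrite IHn; lra. Qed.

Lemma sum1n_scal_r n c f : sum1n n (fun i => f i * c) = sum1n n f * c.
Proof. induction n; simpl; [lra|]. rewrite IHn; lra. Qed.

Lemma sum1n_zero n f : (forall i, (1<=i<=n)%nat -> f i = 0) -> sum1n n f = 0.
Proof. intros H. rewrite (sum1n_ext n f (fun _ => 0)) by auto. clear H.
  induction n; simpl; [lra|]. rewrite IHn; lra. Qed.

Lemma sum1n_single n j F : (1 <= j <= n)%nat ->
  (forall i, (1<=i<=n)%nat -> i <> j -> F i = 0) -> sum1n n F = F j.
Proof.
  induction n; intros Hj H; [lia|]. simpl.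
  destruct (Nat.eq_dec j (S n)) as [->|Hne].
  - rewrite sum1n_zero; [lra|]. intros i Hi; apply H; lia.
  - rewrite IHn by (try lia; intros i Hi Hij; apply H; lia). rewrite (H (S n)) by lia. lra.
Qed.

Lemma sum1n_swap n N F : sum1n n (fun i => sum1n N (fun j => F i j)) = sum1n N (fun j => sum1n n (fun i => F i j)).
Proof. induction n; simpl.
  - symmetry; apply sum1n_zero; intros; reflexivity.
  - rewrite IHn, sum1n_plus. reflexivity. Qed.

Lemma sum1n_mul n f g : sum1n n f * sum1n n g = sum1n n (fun s => sum1n n (fun t => f s * g t)).
Proof. rewrite <- sum1n_scal_r. apply sum1n_ext; intros s _.
  rewrite <- sum1n_scal. reflexivity. Qed.

Definition Q N (a Y : nat -> R) := sum1n N (fun s => sum1n N (fun t => Y s * Y t / (a s + a t))).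

Lemma cauchy N a : (forall s, (1<=s<=N)%nat -> a s > 0) ->
  (forall s t, (1<=s<=N)%nat -> (1<=t<=N)%nat -> a s = a t -> s = t) ->
  forall Y, Q N a Y >= 0 /\ ((exists s, (1<=s<=N)%nat /\ Y s <> 0) -> Q N a Y > 0).
Proof.
  induction N; intros Hpos Hinj Y.
  - unfold Q; simpl. split; [lra|]. intros [s [Hs _]]; lia.
  - assert (Hb : a (S N) > 0) by (apply Hpos; lia).
    set (L := sum1n (S N) (fun t => Y t * (2*a (S N)/(a (S N) + a t)))).
    set (Z := fun s => Y s * ((a s - a (S N))/(a s + a (S N)))).
    assert (Heq : Q (S N) a Y = L*L/(2*a (S N)) + Q N a Z).
    { unfold Q.
      transitivity (sum1n (S N) (fun s => sum1n (S N) (fun t =>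
          (Y s * (2*a (S N)/(a (S N) + a s))) * (Y t * (2*a (S N)/(a (S N) + a t))) / (2*a (S N))
          + Y s * Y t * ((a s - a (S N))*(a t - a (S N))/((a s + a t)*(a s + a (S N))*(a t + a (S N))))))).
      { apply sum1n_ext; intros s Hs; apply sum1n_ext; intros t Ht.
        assert (a s > 0) by (apply Hpos; lia). assert (a t > 0) by (apply Hpos; lia).
        field; repeat split; lra. }
      rewrite (sum1n_ext _ _ (fun s => sum1n (S N) (fun t => (Y s * (2*a (S N)/(a (S N) + a s))) * (Y t * (2*a (S N)/(a (S N) + a t))) / (2*a (S N))) + sum1n (S N) (fun t => Y s * Y t * ((a s - a (S N))*(a t - a (S N))/((a s + a t)*(a s + a (S N))*(a t + a (S N))))))) by (intros; apply sum1n_plus).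
      rewrite sum1n_plus. f_equal.
      + unfold L. rewrite sum1n_mul. unfold Rdiv. rewrite <- sum1n_scal_r.
        apply sum1n_ext; intros s _. rewrite <- sum1n_scal_r. apply sum1n_ext; intros t _.
        unfold Rdiv; ring.
      + rewrite sum1n_S.
        match goal with |- _ + ?X = _ => replace X with 0 by (symmetry; apply sum1n_zero; intros; cbv beta; unfold Rdiv; ring) end.
        rewrite Rplus_0_r. apply sum1n_ext; intros s Hs. rewrite sum1n_S.
        match goal with |- _ + ?X = _ => replace X with 0 by (unfold Rdiv; ring) end.
        rewrite Rplus_0_r. apply sum1n_ext; intros t Ht. unfold Z.
        assert (a s > 0) by (apply Hpos; lia). assert (a t > 0) by (apply Hpos; lia).
        field; repeat split; lra. }
    assert (HposN : forall s, (1<=s<=N)%nat -> a s > 0) by (intros; apply Hpos; lia).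
    assert (HinjN : forall s t, (1<=s<=N)%nat -> (1<=t<=N)%nat -> a s = a t -> s = t)
      by (intros; apply Hinj; auto; lia).
    destruct (IHN HposN HinjN Z) as [HQ1 HQ2].
    assert (HL : L*L/(2*a (S N)) >= 0).
    { apply Rle_ge. unfold Rdiv. apply Rmult_le_pos. nra. left; apply Rinv_0_lt_compat; lra. }
    rewrite Heq. split; [lra|].
    intros [s [Hs HYs]].
    destruct (classic (exists s', (1<=s'<=N)%nat /\ Y s' <> 0)) as [[s' [Hs' HY']]|Hno].
    + assert (Q N a Z > 0).
      { apply HQ2. exists s'. split; auto. unfold Z.
        assert (a s' > 0) by auto.
        assert (a s' <> a (S N)).
        { intro E. assert (s' = S N) by (apply Hinj; [lia|lia|exact E]). lia. }
        apply Rmult_integral_contrapositive; split; auto. unfold Rdiv.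
        apply Rmult_integral_contrapositive; split. lra. apply Rinv_neq_0_compat; lra. }
      lra.
    + assert (s = S N).
      { destruct (Nat.eq_dec s (S N)); auto. exfalso; apply Hno; exists s; split; [lia|auto]. }
      subst s.
      assert (HLY : L = Y (S N)).
      { unfold L. rewrite sum1n_S. rewrite sum1n_zero. field. lra.
        intros i Hi. destruct (Req_dec (Y i) 0) as [E|E]. rewrite E; ring.
        exfalso; apply Hno; eauto. }
      assert (L*L/(2*a (S N)) > 0).
      { rewrite HLY. pose proof (Rsqr_pos_lt _ HYs). unfold Rsqr in *. unfold Rdiv.
        apply Rmult_lt_0_compat. lra. apply Rinv_0_lt_compat; lra. }
      lra.
Qed.

Fixpoint G (n : nat) (x : nat -> R) (k : nat) (c : nat -> R) (s0 : nat) : R :=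
  match k with
  | O => c s0
  | S k' => sum1n n (fun i => x i * G n x k' c (s0 + i)%nat)
  end.

Definition lsum (l : list nat) := List.fold_right Nat.add 0%nat l.

Lemma lsum_app l1 l2 : lsum (l1 ++ l2) = (lsum l1 + lsum l2)%nat.
Proof. unfold lsum; induction l1; simpl; [reflexivity|]. rewrite IHl1; lia. Qed.

Lemma lsum_rev l : lsum (List.rev l) = lsum l.
Proof. induction l; simpl; [reflexivity|]. rewrite lsum_app, IHl. unfold lsum; simpl. lia. Qed.

Lemma tform_G n x c k : forall pre p,
  tform_aux n (fun l => c (lsum l)) x k pre p = p * G n x k c (lsum pre).
Proof.
  induction k; intros pre p; simpl.
  - rewrite lsum_rev; ring.
  - rewrite <- sum1n_scal. apply sum1n_ext; intros i _. rewrite IHk.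
    replace (lsum (i :: pre)) with (lsum pre + i)%nat by (unfold lsum; simpl; lia). ring.
Qed.

Section GS.
Variable n : nat.
Variable x : nat -> R.

Lemma G_split k l c : forall s0, G n x (k + l) c s0 = G n x k (fun s => G n x l c s) s0.
Proof. induction k; intros s0; simpl; auto. apply sum1n_ext; intros; rewrite IHk; reflexivity. Qed.

Lemma G_ext k : forall c c' s0, (forall u, (s0 + k <= u <= s0 + k*n)%nat -> c u = c' u) ->
  G n x k c s0 = G n x k c' s0.
Proof.
  induction k; simpl; intros c c' s0 H. apply H; lia.
  apply sum1n_ext; intros i Hi. f_equal. apply IHk. intros u Hu. apply H. nia.
Qed.

Lemma G_shift k : forall c s0 d, G n x k c (s0 + d) = G n x k (fun u => c (u + d)%nat) s0.
Proof.
  induction k; simpl; intros. reflexivity.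
  apply sum1n_ext; intros i _. replace (s0 + d + i)%nat with (s0 + i + d)%nat by lia.
  rewrite IHk. reflexivity.
Qed.

Lemma G_lin k : forall N w F s0,
  G n x k (fun u => sum1n N (fun s => w s * F s u)) s0 = sum1n N (fun s => w s * G n x k (F s) s0).
Proof.
  induction k; simpl; intros. reflexivity.
  transitivity (sum1n n (fun i => sum1n N (fun s => w s * (x i * G n x k (F s) (s0+i)%nat)))).
  { apply sum1n_ext; intros i _. rewrite IHk, <- sum1n_scal. apply sum1n_ext; intros; ring. }
  rewrite sum1n_swap. apply sum1n_ext; intros s _. rewrite sum1n_scal. reflexivity.
Qed.

Definition Ydef k s := G n x k (fun u => if Nat.eqb u (k - 1 + s) then 1 else 0) 0.

Lemma G_rep k f s0 : (1 <= k)%nat -> (1 <= n)%nat ->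
  G n x k f s0 = sum1n (k*(n-1)+1) (fun s => f (s0 + (k - 1 + s))%nat * Ydef k s).
Proof.
  intros Hk Hn.
  rewrite (G_ext k f (fun u => sum1n (k*(n-1)+1) (fun s => f (s0 + (k-1+s))%nat *
      (fun s u => if Nat.eqb u (s0 + (k-1+s)) then 1 else 0) s u)) s0).
  - rewrite G_lin. apply sum1n_ext; intros s Hs. f_equal. unfold Ydef.
    pose proof (G_shift k (fun u => if Nat.eqb u (s0 + (k-1+s)) then 1 else 0) 0 s0) as E.
    rewrite Nat.add_0_l in E. rewrite E. apply G_ext; intros u _.
    destruct (Nat.eqb_spec (u+s0) (s0 + (k-1+s))), (Nat.eqb_spec u (k-1+s)); try lia; reflexivity.
  - intros u Hu.
    rewrite (sum1n_single _ (u - s0 - (k-1))).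
    + replace (s0 + (k - 1 + (u - s0 - (k - 1))))%nat with u by lia. rewrite Nat.eqb_refl. ring.
    + nia.
    + intros i Hi Hne. destruct (Nat.eqb_spec u (s0 + (k-1+i))); [lia|ring].
Qed.

Section Min.
Variable i0 : nat.
Hypothesis Hmin : forall i, (1 <= i < i0)%nat -> x i = 0.
Hypothesis Hi0 : (1 <= i0 <= n)%nat.

Lemma Gd0 k : forall s0 T, (T < s0 + k*i0)%nat ->
  G n x k (fun u => if Nat.eqb u T then 1 else 0) s0 = 0.
Proof.
  induction k; simpl; intros s0 T H.
  - destruct (Nat.eqb_spec s0 T); [lia|reflexivity].
  - apply sum1n_zero; intros i Hi. destruct (Nat.lt_ge_cases i i0).
    + rewrite Hmin by lia; ring.
    + rewrite IHk by nia; ring.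
Qed.

Lemma Gd1 k : forall s0 T, T = (s0 + k*i0)%nat ->
  G n x k (fun u => if Nat.eqb u T then 1 else 0) s0 = x i0 ^ k.
Proof.
  induction k; simpl; intros s0 T H.
  - destruct (Nat.eqb_spec s0 T); [reflexivity|lia].
  - rewrite (sum1n_single n i0).
    + rewrite (IHk (s0 + i0)%nat) by nia. reflexivity.
    + lia.
    + intros i Hi Hne. destruct (Nat.lt_ge_cases i i0).
      * rewrite Hmin by lia; ring.
      * rewrite Gd0 by nia; ring.
Qed.
End Min.

Lemma G_unit k j c : (1 <= j <= n)%nat -> x = (fun i => if Nat.eqb i j then 1 else 0) ->
  forall s0, G n x k c s0 = c (s0 + k*j)%nat.
Proof.
  intros Hj Hx. induction k; simpl; intros s0. f_equal; lia.
  rewrite (sum1n_single n j).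
  - rewrite IHk, Hx, Nat.eqb_refl, Rmult_1_l. f_equal; lia.
  - lia.
  - intros i Hi Hne. rewrite Hx. destruct (Nat.eqb_spec i j); [lia|ring].
Qed.
End GS.

Lemma min_exists (x : nat -> R) : forall j, (forall i, (1 <= i <= j)%nat -> x i = 0) \/
  (exists i0, (1 <= i0 <= j)%nat /\ x i0 <> 0 /\ forall i, (1<=i<i0)%nat -> x i = 0).
Proof.
  induction j.
  - left; intros; lia.
  - destruct IHj as [H|[i0 [H1 [H2 H3]]]].
    + destruct (Req_dec (x (S j)) 0) as [E|E].
      * left; intros i Hi. destruct (Nat.eq_dec i (S j)); [subst; auto| apply H; lia].
      * right; exists (S j); split; [lia|split; auto]. intros; apply H; lia.
    + right; exists i0; repeat split; auto; lia.
Qed.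

Theorem theorem5p1 (m n : nat) (g h : R)
  (Hm : (2 <= m)%nat) (Hev : Nat.Even m) (Hn : (2 <= n)%nat)
  (Hh : h <> 0) (Hgh : forall z : Z, g / h <> IZR z) :
  pos_def m n (cauchy_hankel g h) <->
  (g + INR m * h > 0 /\ g + INR n * INR m * h > 0).
Proof.
  set (c := fun s : nat => / (g + h * INR s)).
  assert (Htf : forall x, tform m n (cauchy_hankel g h) x = G n x m c 0).
  { intros x. unfold tform. transitivity (1 * G n x m c (lsum nil)); [exact (tform_G n x c m nil 1)|].
    simpl. ring. }
  split.
  - intros Hpd.
    assert (Hu : forall j, (1<=j<=n)%nat -> g + h * INR (m*j) > 0).
    { intros j Hj. set (e := fun i => if Nat.eqb i j then 1 else 0).
      assert (He : vec_nonzero n e) by (exists j; split; auto; unfold e; rewrite Nat.eqb_refl; lra).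
      specialize (Hpd e He). rewrite Htf in Hpd.
      rewrite (G_unit n e m j c Hj eq_refl 0) in Hpd. unfold c in Hpd.
      rewrite Nat.add_0_l in Hpd.
      destruct (Rtotal_order (g + h * INR (m*j)) 0) as [L|[L|L]]; auto.
      - pose proof (Rinv_lt_0_compat _ L). lra.
      - rewrite L, Rinv_0 in Hpd. lra. }
    pose proof (Hu 1%nat ltac:(lia)) as A1. pose proof (Hu n ltac:(lia)) as A2.
    rewrite Nat.mul_1_r in A1. rewrite mult_INR in A2. split; nra.
  - intros [H1 H2] x Hx.
    destruct Hev as [k Hk]. assert (Hk1 : (1<=k)%nat) by lia.
    assert (HmR : INR m = 2 * INR k) by (subst m; rewrite mult_INR; simpl; ring).
    rewrite Htf. replace m with (k + k)%nat by lia. rewrite G_split.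
    rewrite (G_rep n x k _ 0) by lia.
    set (N := (k*(n-1)+1)%nat).
    set (a := fun s => g/2 + h * INR (k-1+s)).
    set (Y := Ydef n x k).
    assert (Heq : sum1n N (fun s => G n x k c (0 + (k-1+s))%nat * Y s) = Q N a Y).
    { unfold Q. apply sum1n_ext; intros s Hs. rewrite (G_rep n x k c) by lia.
      rewrite Rmult_comm, <- sum1n_scal. apply sum1n_ext; intros t Ht. unfold c.
      replace (INR (0 + (k - 1 + s) + (k - 1 + t))) with (INR (k-1+s) + INR (k-1+t))
        by (rewrite <- plus_INR; f_equal; lia).
      replace (a s + a t) with (g + h*(INR(k-1+s)+INR(k-1+t))) by (unfold a; field).
      unfold Y, Rdiv; ring. }
    rewrite Heq.
    assert (Hpos : forall s, (1<=s<=N)%nat -> a s > 0).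
    { intros s Hs. unfold a.
      assert (Hu1 : INR k <= INR (k-1+s)) by (apply le_INR; lia).
      assert (Hu2 : INR (k-1+s) <= INR k * INR n) by (rewrite <- mult_INR; apply le_INR; unfold N in Hs; nia).
      rewrite HmR in H1, H2.
      destruct (Rle_lt_dec 0 h).
      - assert (h*(INR (k-1+s) - INR k) >= 0) by (apply Rle_ge, Rmult_le_pos; lra). nra.
      - assert (h*(INR (k-1+s) - INR k * INR n) >= 0).
        { apply Rle_ge. replace (h*(INR (k-1+s) - INR k * INR n)) with ((-h)*(INR k * INR n - INR (k-1+s))) by ring.
          apply Rmult_le_pos; lra. }
        nra. }
    assert (Hinj : forall s t, (1<=s<=N)%nat -> (1<=t<=N)%nat -> a s = a t -> s = t).
    { intros s t _ _ E. unfold a in E.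
      assert (E2 : h * INR (k-1+s) = h * INR (k-1+t)) by lra.
      apply Rmult_eq_reg_l in E2; auto. apply INR_eq in E2. lia. }
    destruct (cauchy N a Hpos Hinj Y) as [_ Hs]. apply Hs.
    destruct (min_exists x n) as [Hz|[i0 [Hi0 [Hxi0 Hmin]]]].
    + destruct Hx as [i [Hi Hxi]]. exfalso; apply Hxi; auto.
    + exists (k*(i0-1)+1)%nat. split; [unfold N; nia|].
      unfold Y, Ydef. rewrite (Gd1 n x i0 Hmin Hi0 k 0) by nia.
      apply pow_nonzero; auto.
Qed.
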